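(* Let $f_1,\dots,f_n\in\mathbb{Z}[x_1,\dots,x_n,y_1,\dots,y_n,z_1,\dots,z_r]$ and for $\overline{z}\in\mathbb{C}^r$ let $F_{\overline{z}}:\mathbb{C}^n\times\mathbb{C}^n\to\mathbb{C}^n$ be the map $(\overline{x},\overline{y})\mapsto(f_1,\dots,f_n)(\overline{x},\overline{y},\overline{z})$. The set of $\overline{z}\in\mathbb{C}^r$ such that $F_{\overline{z}}$ has a balanced zero is an open subset of $\mathbb{C}^r$. Likewise, the set of $\overline{z}\in\mathbb{C}^r$ such that $F_{\overline{z}}$ has a well balanced zero is an open subset of $\mathbb{C}^r$.
   Context: A zero $(\overline{a},\overline{b})$ of a polynomial map $G:\mathbb{C}^n\times\mathbb{C}^n\to\mathbb{C}^n$ is a balanced zero if (1) $a_1,\dots,a_n$ are nonzero and pairwise distinct, and (2) there is a partition $I\sqcup J=\{1,\dots,n\}$ such that the $n\times n$ Jacobian matrix of $G$ with respect to the variables $(x_i)_{i\in I}$ and $(y_j)_{j\in J}$ is nonsingular at $(\overline{a},\overline{b})$. It is a well balanced zero if moreover (3) the tangent space $(\overline{a},\overline{b})+\ker DG(\overline{a},\overline{b})$ is not contained in any hyperplane $\{x_i=c\}$ with $i\in\{1,\dots,n\}$, $c\in\mathbb{C}$. *)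

(* Defs.v *)
From HB Require Import structures.
From mathcomp Require Import all_boot all_order all_algebra.
From mathcomp Require Import complex.
From mathcomp Require Import Rstruct.
From mathcomp Require Import mpoly.
From Stdlib Require Rdefinitions.

Set Implicit Arguments.
Unset Strict Implicit.
Unset Printing Implicit Defensive.
Import Order.TTheory GRing.Theory Num.Theory.
Local Open Scope ring_scope.

Definition C : Type := (Rdefinitions.R)[i].

(* Variables of Z[x_1..x_n, y_1..y_n, z_1..z_r] are indexed by 'I_(n+n+r):
   x_i = lshift r (lshift n i), y_j = lshift r (rshift n j), z_l = rshift (n+n) l. *)
Definition xvar (n r : nat) (i : 'I_n) : 'I_(n + n + r) := lshift r (lshift n i).
Definition yvar (n r : nat) (j : 'I_n) : 'I_(n + n + r) := lshift r (rshift n j).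

Definition pt (n r : nat) (a b : 'I_n -> C) (z : 'I_r -> C) : 'I_(n + n + r) -> C :=
  fun k => match split k with
           | inl k1 => match split k1 with inl i => a i | inr j => b j end
           | inr l => z l
           end.

Definition evalC (N : nat) (p : {mpoly int[N]}) (v : 'I_N -> C) : C :=
  meval v (map_mpoly (fun c : int => c%:~R : C) p).

Definition dpoly (N : nat) (p : {mpoly int[N]}) (k : 'I_N) (v : 'I_N -> C) : C :=
  evalC (mderiv k p) v.

(* The partition
   I ⊔ J of {1..n} is encoded by I : {set 'I_n}, J its complement; column j of
   the Jacobian is the derivative w.r.t. x_j if j ∈ I and w.r.t. y_j if j ∈ J. *)
Definition balanced_zero (n r : nat) (f : 'I_n -> {mpoly int[n + n + r]})
    (z : 'I_r -> C) (a b : 'I_n -> C) : Prop :=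
  [/\ (forall k, evalC (f k) (pt a b z) = 0),
      (forall i, a i != 0),
      (forall i j, a i = a j -> i = j) &
      exists I : {set 'I_n},
        (\matrix_(k < n, j < n)
            dpoly (f k) (if j \in I then xvar r j else yvar r j) (pt a b z))
          \in unitmx].

(* Kernel of DF_z(a,b) (the n x 2n Jacobian w.r.t. (x,y)); vectors of C^(2n)
   are indexed by 'I_(n+n), index lshift n i <-> x_i, rshift n j <-> y_j. *)
Definition in_ker_DG (n r : nat) (f : 'I_n -> {mpoly int[n + n + r]})
    (z : 'I_r -> C) (a b : 'I_n -> C) (v : 'I_(n + n) -> C) : Prop :=
  forall k : 'I_n,
    \sum_(w < n + n) dpoly (f k) (lshift r w) (pt a b z) * v w = 0.

Definition well_balanced_zero (n r : nat) (f : 'I_n -> {mpoly int[n + n + r]})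
    (z : 'I_r -> C) (a b : 'I_n -> C) : Prop :=
  balanced_zero f z a b /\
  ~ (exists (i : 'I_n) (c : C),
       forall v : 'I_(n + n) -> C, in_ker_DG f z a b v ->
         a i + v (lshift n i) = c).

(* Openness in C^r for the standard (product / sup-norm) topology. *)
Definition open_Cr (r : nat) (S : ('I_r -> C) -> Prop) : Prop :=
  forall z, S z -> exists e : Rdefinitions.R, 0 < e /\
    forall z' : 'I_r -> C, (forall l, `|z' l - z l| < (e%:C)%C) -> S z'.

(* Main.v *)
Require Import Defs.
From HB Require Import structures.
From mathcomp Require Import all_boot all_order all_algebra.
From mathcomp Require Import complex Rstruct mpoly.
From mathcomp Require Import ring lra.
From mathcomp Require Import classical_sets boolp functions topology normedtype sequences.
From mathcomp Require Import reals Rstruct_topology interval_inference.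
From Stdlib Require Import FunctionalExtensionality.
From Stdlib Require Classical_Prop.
Import Order.TTheory GRing.Theory Num.Theory.
Local Open Scope ring_scope.
Local Notation R := Rdefinitions.R.

Unset Implicit Arguments.
Set Strict Implicit.


Definition nc (x : C) : R := complex.Re `|x|.

Lemma normcE (x : C) : `|x| = (nc x)%:C%C.
Proof. by rewrite /nc normc_def. Qed.

Lemma nc_ge0 x : 0 <= nc x.
Proof. by rewrite /nc normc_def /= sqrtr_ge0. Qed.

Lemma ncD x y : nc (x + y) <= nc x + nc y.
Proof. by have := ler_normD x y; rewrite !normcE -rmorphD lecR. Qed.

Lemma ncM x y : nc (x * y) = nc x * nc y.
Proof. by have := normrM x y; rewrite !normcE -rmorphM => /complexI. Qed.

Lemma ncN x : nc (- x) = nc x.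
Proof. by rewrite /nc normrN. Qed.

Lemma ncB x y : nc (x - y) = nc (y - x).
Proof. by rewrite /nc distrC. Qed.

Lemma nc0 : nc 0 = 0.
Proof. by rewrite /nc normr0. Qed.

Lemma nc_eq0 x : nc x = 0 -> x = 0.
Proof. by move=> h; apply/normr0_eq0; rewrite normcE h. Qed.

Lemma nc_real a : nc (a%:C)%C = `|a|.
Proof. by rewrite /nc normc_def /= expr0n /= addr0 sqrtr_sqr. Qed.

Lemma nc_cplx a b : nc (a +i* b)%C <= `|a| + `|b|.
Proof.
have -> : (a +i* b)%C = (a%:C)%C + (b%:C)%C * 'i%C.
  by apply/eqP; rewrite eq_complex /=; apply/andP; split; apply/eqP; ring.
apply: le_trans (ncD _ _) _; rewrite ncM !nc_real.
have -> : nc 'i%C = 1 by rewrite /nc normc_def /= expr0n expr1n /= add0r sqrtr1.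
by rewrite mulr1.
Qed.

Lemma Re_le x : `|complex.Re x| <= nc x.
Proof.
case: x => a b; rewrite /nc normc_def /= -sqrtr_sqr ler_sqrt ?addr_ge0 ?sqr_ge0 //.
by rewrite lerDl sqr_ge0.
Qed.

Lemma Im_le x : `|complex.Im x| <= nc x.
Proof.
case: x => a b; rewrite /nc normc_def /= -sqrtr_sqr ler_sqrt ?addr_ge0 ?sqr_ge0 //.
by rewrite lerDr sqr_ge0.
Qed.

Lemma ltcE' (w : C) e : (`|w| < (e%:C)%C) = (nc w < e).
Proof. by rewrite normcE ltcR. Qed.
Section EV.
Variable N : nat.
Implicit Types p q : {mpoly int[N]}.
Lemma evalC_add p q w : evalC (p + q) w = evalC p w + evalC q w.
Proof. by rewrite /evalC rmorphD mevalD. Qed.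
Lemma evalC_mul p q w : evalC (p * q) w = evalC p w * evalC q w.
Proof. by rewrite /evalC rmorphM mevalM. Qed.
Lemma evalC_X (i : 'I_N) w : evalC ('X_i : {mpoly int[N]}) w = w i.
Proof. by rewrite /evalC map_mpolyX mevalXU. Qed.
Lemma evalC_C c w : evalC (c%:MP : {mpoly int[N]}) w = c%:~R.
Proof. by rewrite /evalC map_mpolyC mevalC. Qed.
Lemma dpoly_add p q k w : dpoly (p + q) k w = dpoly p k w + dpoly q k w.
Proof. by rewrite /dpoly mderivD evalC_add. Qed.
Lemma dpoly_mul p q k w : dpoly (p * q) k w = dpoly p k w * evalC q w + evalC p w * dpoly q k w.
Proof. by rewrite /dpoly mderivM evalC_add !evalC_mul. Qed.
Lemma dpoly_C c k w : dpoly (c%:MP : {mpoly int[N]}) k w = 0.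
Proof. by rewrite /dpoly mderivC /evalC rmorph0 meval0. Qed.
End EV.
Lemma dpoly_X N (i : 'I_N) k w : dpoly ('X_i : {mpoly int[N]}) k w = (k == i)%:R.
Proof.
rewrite /dpoly mderivX mnm1E eq_sym.
case: eqP => [->|_]; last by rewrite scale0r /evalC rmorph0 meval0.
have -> : (U_(i) - U_(i))%MM = 0%MM :> 'X_{1..N}.
  by apply/mnmP => j; rewrite mnmBE mnm0E subnn.
by rewrite scale1r mpolyX0 /evalC rmorph1 meval1.
Qed.


Unset Implicit Arguments.
Set Strict Implicit.
Set Implicit Arguments.
Unset Strict Implicit.

Lemma nc_sum (I : Type) (s : seq I) (P : pred I) (F : I -> C) :
  nc (\sum_(i <- s | P i) F i) <= \sum_(i <- s | P i) nc (F i).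
Proof.
elim/big_rec2: _ => [|i y1 y2 _ h]; first by rewrite nc0.
by apply: le_trans (ncD _ _) _; rewrite lerD2l.
Qed.

Lemma exists_eps (A e : R) : 0 <= A -> 0 < e -> exists2 t : R, 0 < t & t * A <= e.
Proof.
move=> A0 e0; exists (e / (A + 1)); first by rewrite divr_gt0 // ltr_wpDl.
rewrite mulrAC ler_pdivrMr ?ltr_wpDl // ler_pM2l //; lra.
Qed.

Lemma min_le1 (a b : R) : Num.min a b <= a.
Proof. by rewrite ge_min lexx. Qed.
Lemma min_le2 (a b : R) : Num.min a b <= b.
Proof. by rewrite ge_min lexx orbT. Qed.
Lemma min_gt0 (a b : R) : 0 < a -> 0 < b -> 0 < Num.min a b.
Proof. by move=> ha hb; rewrite lt_min ha hb. Qed.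

Section Analysis.
Variable N : nat.
Implicit Types (w v L M : 'I_N -> C) (g h : ('I_N -> C) -> C).

Definition cls w w0 (d : R) := forall k, nc (w k - w0 k) <= d.
Definition S1 (v : 'I_N -> C) : R := \sum_k nc (v k).
Definition vdot (L v : 'I_N -> C) : C := \sum_k L k * v k.
Definition Cont g w0 := forall e : R, 0 < e ->
  exists2 d : R, 0 < d & forall w, cls w w0 d -> nc (g w - g w0) <= e.
Definition SD g L w0 := forall e : R, 0 < e ->
  exists2 d : R, 0 < d & forall w w', cls w w0 d -> cls w' w0 d ->
    nc (g w - g w' - vdot L (fun k => w k - w' k)) <= e * S1 (fun k => w k - w' k).

Lemma S1_ge0 v : 0 <= S1 v.
Proof. by apply: sumr_ge0 => k _; exact: nc_ge0. Qed.

Lemma nc_le_S1 v k : nc (v k) <= S1 v.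
Proof.
rewrite /S1 (bigD1 k) //= lerDl; apply: sumr_ge0 => j _; exact: nc_ge0.
Qed.

Lemma vdot_le L v : nc (vdot L v) <= S1 L * S1 v.
Proof.
apply: le_trans (nc_sum _ _ _) _; rewrite /S1 mulr_suml.
apply: ler_sum => k _; rewrite ncM ler_wpM2l ?nc_ge0 //; exact: nc_le_S1.
Qed.

Lemma cls_S1 w w0 d : cls w w0 d -> S1 (fun k => w k - w0 k) <= N%:R * d.
Proof.
move=> h; apply: le_trans (ler_sum _ (fun k _ => h k)) _.
by rewrite sumr_const card_ord mulr_natl.
Qed.

Lemma cls_le w w0 d d' : d <= d' -> cls w w0 d -> cls w w0 d'.
Proof. by move=> dd h k; apply: le_trans (h k) dd. Qed.

Lemma cls_refl w0 d : 0 <= d -> cls w0 w0 d.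
Proof. by move=> d0 k; rewrite subrr nc0. Qed.

Lemma vdotD L M v : vdot (fun k => L k + M k) v = vdot L v + vdot M v.
Proof. by rewrite /vdot -big_split; apply: eq_bigr => k _; rewrite mulrDl. Qed.

Lemma vdotZ a L v : vdot (fun k => a * L k) v = a * vdot L v.
Proof. by rewrite /vdot mulr_sumr; apply: eq_bigr => k _; rewrite mulrA. Qed.

Lemma vdotZr a L v : vdot (fun k => L k * a) v = a * vdot L v.
Proof. by rewrite /vdot mulr_sumr; apply: eq_bigr => k _; rewrite mulrCA mulrA. Qed.

Lemma vdot0 v : vdot (fun _ => 0) v = 0.
Proof. by rewrite /vdot big1 // => k _; rewrite mul0r. Qed.

Lemma vdot_delta i v : vdot (fun k => (k == i)%:R) v = v i.
Proof.
rewrite /vdot (bigD1 i) //= eqxx mul1r big1 ?addr0 // => k /negbTE ->.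
by rewrite mul0r.
Qed.

Lemma Cont_const c w0 : Cont (fun _ => c) w0.
Proof. by move=> e e0; exists 1 => // w _; rewrite subrr nc0 ltW. Qed.

Lemma Cont_coord i w0 : Cont (fun w => w i) w0.
Proof. by move=> e e0; exists e. Qed.

Lemma Cont_add g h w0 : Cont g w0 -> Cont h w0 -> Cont (fun w => g w + h w) w0.
Proof.
move=> cg ch e e0.
have e2 : 0 < e / 2 by rewrite divr_gt0.
have [d1 d10 h1] := cg _ e2; have [d2 d20 h2] := ch _ e2.
exists (Num.min d1 d2); first exact: min_gt0.
move=> w hw; have := h1 w (cls_le (min_le1 _ _) hw).
have := h2 w (cls_le (min_le2 _ _) hw).
have -> : g w + h w - (g w0 + h w0) = (g w - g w0) + (h w - h w0) by ring.
move=> a b; apply: le_trans (ncD _ _) _; lra.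
Qed.

Lemma Cont_bound g w0 : Cont g w0 ->
  exists2 d : R, 0 < d & forall w, cls w w0 d -> nc (g w) <= nc (g w0) + 1.
Proof.
move=> cg; have [d d0 h] := cg 1 ltr01; exists d => // w hw.
have -> : g w = (g w - g w0) + g w0 by ring.
apply: le_trans (ncD _ _) _; have := h w hw; lra.
Qed.

Lemma Cont_mul g h w0 : Cont g w0 -> Cont h w0 -> Cont (fun w => g w * h w) w0.
Proof.
move=> cg ch e e0.
have e2 : 0 < e / 2 by rewrite divr_gt0.
have [t1 t10 ht1] := exists_eps (nc_ge0 (g w0)) e2.
have [t2 t20 ht2] := exists_eps (addr_ge0 (nc_ge0 (h w0)) ler01) e2.
have [d1 d10 h1] := cg _ t20; have [d2 d20 h2] := ch _ t10.
have [d3 d30 h3] := Cont_bound ch.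
exists (Num.min d1 (Num.min d2 d3)); first by rewrite !min_gt0.
move=> w hw.
have hw1 := cls_le (min_le1 _ _) hw.
have hw' := cls_le (min_le2 _ _) hw.
have hw2 := cls_le (min_le1 _ _) hw'.
have hw3 := cls_le (min_le2 _ _) hw'.
have -> : g w * h w - g w0 * h w0 = (g w - g w0) * h w + g w0 * (h w - h w0) by ring.
apply: le_trans (ncD _ _) _; rewrite !ncM.
have a1 : nc (g w - g w0) * nc (h w) <= t2 * (nc (h w0) + 1).
  by apply: ler_pM; rewrite ?nc_ge0 ?h1 ?h3.
have a2 : nc (g w0) * nc (h w - h w0) <= nc (g w0) * t1.
  by rewrite ler_wpM2l ?nc_ge0 ?h2.
rewrite mulrC in ht1; lra.
Qed.

Lemma SD_const c w0 : SD (fun _ => c) (fun _ => 0) w0.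
Proof.
move=> e e0; exists 1 => // w w' _ _.
by rewrite vdot0 !subrr nc0 mulr_ge0 ?S1_ge0 // ltW.
Qed.

Lemma SD_coord i w0 : SD (fun w => w i) (fun k => (k == i)%:R) w0.
Proof.
move=> e e0; exists 1 => // w w' _ _.
by rewrite vdot_delta subrr nc0 mulr_ge0 ?S1_ge0 // ltW.
Qed.

Lemma SD_add g h Lg Lh w0 : SD g Lg w0 -> SD h Lh w0 ->
  SD (fun w => g w + h w) (fun k => Lg k + Lh k) w0.
Proof.
move=> sg sh e e0.
have e2 : 0 < e / 2 by rewrite divr_gt0.
have [d1 d10 h1] := sg _ e2; have [d2 d20 h2] := sh _ e2.
exists (Num.min d1 d2); first exact: min_gt0.
move=> w w' hw hw'.
have := h1 w w' (cls_le (min_le1 _ _) hw) (cls_le (min_le1 _ _) hw').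
have := h2 w w' (cls_le (min_le2 _ _) hw) (cls_le (min_le2 _ _) hw').
rewrite vdotD.
set S := S1 _; set a := vdot Lg _; set b := vdot Lh _.
have -> : g w + h w - (g w' + h w') - (a + b) = (g w - g w' - a) + (h w - h w' - b) by ring.
move=> u v; apply: le_trans (ncD _ _) _; lra.
Qed.

Lemma SD_mul g h Lg Lh w0 : Cont g w0 -> Cont h w0 -> SD g Lg w0 -> SD h Lh w0 ->
  SD (fun w => g w * h w) (fun k => Lg k * h w0 + g w0 * Lh k) w0.
Proof.
move=> cg ch sg sh e e0.
have e2 : 0 < e / 2 by rewrite divr_gt0.
have [t1 t10 ht1] := exists_eps
  (addr_ge0 (addr_ge0 (nc_ge0 (g w0)) (ler01 : (0:R) <= 1))
            (addr_ge0 (nc_ge0 (h w0)) (ler01 : (0:R) <= 1))) e2.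
have [t2 t20 ht2] := exists_eps (addr_ge0 (S1_ge0 Lg) (S1_ge0 Lh)) e2.
have [d1 d10 h1] := sg _ t10; have [d2 d20 h2] := sh _ t10.
have [d3 d30 h3] := cg _ t20; have [d4 d40 h4] := ch _ t20.
have [d5 d50 h5] := Cont_bound cg; have [d6 d60 h6] := Cont_bound ch.
pose d := Num.min d1 (Num.min d2 (Num.min d3 (Num.min d4 (Num.min d5 d6)))).
have dle1 : d <= d1 by apply: min_le1.
have dle2 : d <= d2 by apply: le_trans (min_le2 _ _) (min_le1 _ _).
have dle3 : d <= d3 by do 2 apply: le_trans (min_le2 _ _) _; apply: min_le1.
have dle4 : d <= d4 by do 3 apply: le_trans (min_le2 _ _) _; apply: min_le1.
have dle5 : d <= d5 by do 4 apply: le_trans (min_le2 _ _) _; apply: min_le1.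
have dle6 : d <= d6 by do 4 apply: le_trans (min_le2 _ _) _; apply: min_le2.
exists d; first by rewrite !min_gt0.
move=> w w' hw hw'.
rewrite vdotD vdotZr vdotZ.
set S := S1 _; set a := vdot Lg _; set b := vdot Lh _.
have -> : g w * h w - g w' * h w' - (h w0 * a + g w0 * b) =
  g w * (h w - h w' - b) + (g w - g w0) * b + h w' * (g w - g w' - a)
  + (h w' - h w0) * a by ring.
have S0 : 0 <= S by exact: S1_ge0.
have b1 : nc (g w * (h w - h w' - b)) <= (nc (g w0) + 1) * (t1 * S).
  rewrite ncM; apply: ler_pM; rewrite ?nc_ge0 //; first exact: h5 (cls_le dle5 hw).
  exact: h2 (cls_le dle2 hw) (cls_le dle2 hw').
have b3 : nc (h w' * (g w - g w' - a)) <= (nc (h w0) + 1) * (t1 * S).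
  rewrite ncM; apply: ler_pM; rewrite ?nc_ge0 //; first exact: h6 (cls_le dle6 hw').
  exact: h1 (cls_le dle1 hw) (cls_le dle1 hw').
have b2 : nc ((g w - g w0) * b) <= t2 * (S1 Lh * S).
  rewrite ncM; apply: ler_pM; rewrite ?nc_ge0 //; first exact: h3 (cls_le dle3 hw).
  exact: vdot_le.
have b4 : nc ((h w' - h w0) * a) <= t2 * (S1 Lg * S).
  rewrite ncM; apply: ler_pM; rewrite ?nc_ge0 //; first exact: h4 (cls_le dle4 hw').
  exact: vdot_le.
have c1 : t1 * (nc (g w0) + 1 + (nc (h w0) + 1)) * S <= e / 2 * S by rewrite ler_wpM2r.
have c2 : t2 * (S1 Lg + S1 Lh) * S <= e / 2 * S by rewrite ler_wpM2r.
set TA := g w * _ in b1 *; set TB := (g w - g w0) * b in b2 *.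
set TC := h w' * _ in b3 *; set TD := (h w' - h w0) * a in b4 *.
apply: le_trans (ncD _ _) _; apply: le_trans (lerD (ncD _ _) (lexx _)) _.
apply: le_trans (lerD (lerD (ncD _ _) (lexx _)) (lexx _)) _.
apply: le_trans (lerD (lerD (lerD b1 b2) b3) b4) _.
have -> : e * S = e / 2 * S + e / 2 * S by field.
apply: (le_trans _ (lerD c1 c2)); rewrite le_eqVlt; apply/orP; left; apply/eqP; ring.
Qed.

End Analysis.


Unset Implicit Arguments.
Set Strict Implicit.
Set Implicit Arguments.
Unset Strict Implicit.

Section Poly.
Variable N : nat.
Definition Ppoly (p : {mpoly int[N]}) := forall w0,
  Cont (evalC p) w0 /\ SD (evalC p) (fun k => dpoly p k w0) w0.

Lemma Ppoly_add p q : Ppoly p -> Ppoly q -> Ppoly (p + q).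
Proof.
move=> hp hq w0; have [cp sp] := hp w0; have [cq sq] := hq w0.
have -> : evalC (p + q) = fun w => evalC p w + evalC q w.
  by apply: functional_extensionality => w; rewrite evalC_add.
have -> : (fun k => dpoly (p + q) k w0) = fun k => dpoly p k w0 + dpoly q k w0.
  by apply: functional_extensionality => k; rewrite dpoly_add.
split; [exact: Cont_add | exact: SD_add].
Qed.

Lemma Ppoly_mul p q : Ppoly p -> Ppoly q -> Ppoly (p * q).
Proof.
move=> hp hq w0; have [cp sp] := hp w0; have [cq sq] := hq w0.
have -> : evalC (p * q) = fun w => evalC p w * evalC q w.
  by apply: functional_extensionality => w; rewrite evalC_mul.
have -> : (fun k => dpoly (p * q) k w0) =
   fun k => dpoly p k w0 * evalC q w0 + evalC p w0 * dpoly q k w0.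
  by apply: functional_extensionality => k; rewrite dpoly_mul.
split; [exact: Cont_mul | exact: SD_mul].
Qed.

Lemma Ppoly_C c : Ppoly c%:MP.
Proof.
move=> w0.
have -> : evalC (c%:MP : {mpoly int[N]}) = fun _ => c%:~R.
  by apply: functional_extensionality => w; rewrite evalC_C.
have -> : (fun k => dpoly (c%:MP : {mpoly int[N]}) k w0) = fun _ => 0.
  by apply: functional_extensionality => k; rewrite dpoly_C.
split; [exact: Cont_const | exact: SD_const].
Qed.

Lemma Ppoly_X i : Ppoly 'X_i.
Proof.
move=> w0.
have -> : evalC ('X_i : {mpoly int[N]}) = fun w => w i.
  by apply: functional_extensionality => w; rewrite evalC_X.
have -> : (fun k => dpoly ('X_i : {mpoly int[N]}) k w0) = fun k => (k == i)%:R.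
  by apply: functional_extensionality => k; rewrite dpoly_X.
split; [exact: Cont_coord | exact: SD_coord].
Qed.

End Poly.


Unset Implicit Arguments.
Set Strict Implicit.
Lemma PpolyX N (m : 'X_{1..N}) : Ppoly ('X_[m] : {mpoly int[N]}).
Proof.
have h1 : Ppoly (1 : {mpoly int[N]}).
  have := Ppoly_C (N := N) 1. 
  have -> : (1%:MP : {mpoly int[N]}) = 1 by [].
  done.
have hm : forall x y : {mpoly int[N]}, Ppoly x -> Ppoly y -> Ppoly (x * y).
  move=> x y; exact: (@Ppoly_mul N x y).
have hi : forall i : 'I_N, Ppoly ('X_i ^+ m i : {mpoly int[N]}).
  move=> i; elim: (m i) => [|k ih].
    rewrite expr0. exact: h1.
  rewrite exprS. apply: hm; last exact: ih. exact: Ppoly_X.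
rewrite mpolyXE_id.
apply: (big_ind (@Ppoly N) h1 hm) => i _. exact: hi.
Qed.

Lemma Ppoly_all N (p : {mpoly int[N]}) : Ppoly p.
Proof.
have h0 : Ppoly (0 : {mpoly int[N]}).
  have := Ppoly_C (N := N) 0.
  have -> : (0%:MP : {mpoly int[N]}) = 0 by rewrite mpolyC0.
  exact.
have ha : forall x y : {mpoly int[N]}, Ppoly x -> Ppoly y -> Ppoly (x + y).
  move=> x y; exact: (@Ppoly_add N x y).
rewrite (mpolyE p).
apply: (big_ind (@Ppoly N) h0 ha) => m _.
rewrite -mul_mpolyC. apply: Ppoly_mul. exact: Ppoly_C. exact: PpolyX.
Qed.



Unset Implicit Arguments.
Set Strict Implicit.
Set Implicit Arguments.
Unset Strict Implicit.

Definition RV (K : realType) m := 'rV[K]_m.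
HB.instance Definition _ (K : realType) m := NormedModule.on (RV K m).
HB.instance Definition _ (K : realType) m := Complete.on (RV K m).

Section RVnorm.
Context {m : nat}.
Lemma rv_le (x : RV R m) j : `|x ord0 j| <= `|x|.
Proof.
have -> : `|x| = mx_norm x by [].
rewrite mx_normrE.
exact: (le_bigmax _ (fun ij : 'I_1 * 'I_m => `|x ij.1 ij.2|) (ord0, j)).
Qed.

Lemma rv_ge (x : RV R m) t : 0 <= t -> (forall j, `|x ord0 j| <= t) -> `|x| <= t.
Proof.
move=> t0 h; have -> : `|x| = mx_norm x by [].
rewrite mx_normrE; apply: bigmax_le => // -[i j] _ /=.
by rewrite (ord1 i); exact: h.
Qed.
End RVnorm.

Lemma S1_le N (v : 'I_N -> C) t : (forall k, nc (v k) <= t) -> S1 v <= N%:R * t.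
Proof.
move=> h; apply: le_trans (ler_sum _ (fun k _ => h k)) _.
by rewrite sumr_const card_ord mulr_natl.
Qed.

Lemma MA_sum n (M A : 'M[C]_n) (d : 'I_n -> C) k : M *m A = 1%:M ->
  \sum_j M k j * (\sum_l A j l * d l) = d k.
Proof.
move=> MA.
transitivity (\sum_l (M *m A) k l * d l).
  rewrite (eq_bigr (fun j => \sum_l M k j * (A j l * d l))); last first.
    by move=> j _; rewrite mulr_sumr.
  rewrite exchange_big /=; apply: eq_bigr => l _; rewrite !mxE mulr_suml.
  by apply: eq_bigr => j _; rewrite mulrA.
rewrite MA (bigD1 k) //= !mxE eqxx mulr1n mul1r big1 ?addr0 // => l.
by rewrite mxE eq_sym => /negbTE ->; rewrite mulr0n mul0r.
Qed.

Section Conv.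
Variable n : nat.
Local Notation X := (RV R (n + n)).

Definition toC (x : X) : 'I_n -> C :=
  fun k => (x ord0 (lshift n k) +i* x ord0 (rshift n k))%C.
Definition toX (u : 'I_n -> C) : X :=
  \row_(j < n + n) match fintype.split j with
                   | inl k => complex.Re (u k) | inr k => complex.Im (u k) end.

Lemma toXK u : toC (toX u) = u.
Proof.
apply: funext => k; rewrite /toC !mxE.
rewrite -[lshift n k]/(unsplit (inl k)) -[rshift n k]/(unsplit (inr k)) !unsplitK.
by case: (u k).
Qed.

Lemma toC_diff (x y : X) k : nc (toC x k - toC y k) <= 2 * `|x - y|.
Proof.
have -> : toC x k - toC y k =
  Complex ((x - y) ord0 (lshift n k)) ((x - y) ord0 (rshift n k)).
  by rewrite /toC !mxE.
apply: le_trans (nc_cplx _ _) _.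
have := rv_le (x - y) (lshift n k); have := rv_le (x - y) (rshift n k).
lra.
Qed.

Lemma toX_diff (u v : 'I_n -> C) t : 0 <= t -> (forall k, nc (u k - v k) <= t) ->
  `|toX u - toX v| <= t.
Proof.
move=> t0 h; apply: rv_ge => // j; rewrite !mxE.
case: (fintype.split j) => k.
  apply: le_trans (h k); case: (u k) (v k) => a b [c d].
  by apply: le_trans (Re_le _).
apply: le_trans (h k); case: (u k) (v k) => a b [c d].
by apply: le_trans (Im_le _).
Qed.
End Conv.


Unset Implicit Arguments.
Set Strict Implicit.

Lemma ift (n P : nat) (G : ('I_n -> C) -> ('I_P -> C) -> ('I_n -> C))
    (A : 'M[C]_n) (u0 : 'I_n -> C) (w0 : 'I_P -> C) :
  A \in unitmx ->
  (forall e : R, 0 < e -> exists2 d : R, 0 < d & forall u u' w,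
      cls u u0 d -> cls u' u0 d -> cls w w0 d -> forall k,
      nc (G u w k - G u' w k - \sum_j A k j * (u j - u' j))
        <= e * S1 (fun j => u j - u' j)) ->
  (forall e : R, 0 < e -> exists2 d : R, 0 < d &
      forall w, cls w w0 d -> forall k, nc (G u0 w k) <= e) ->
  forall eta : R, 0 < eta -> exists2 rho : R, 0 < rho &
    forall w, cls w w0 rho -> exists u, cls u u0 eta /\ forall k, G u w k = 0.
Proof.
move=> Au hSD hC eta eta0.
pose M := invmx A.
have MA : M *m A = 1%:M by rewrite mulVmx.
have AM : A *m M = 1%:M by rewrite mulmxV.
pose KM : R := \sum_k S1 (fun j => M k j) + 1.
have KMge : forall k, S1 (fun j => M k j) <= KM.
  move=> k; rewrite /KM (bigD1 k) //= -addrA lerDl addr_ge0 //.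
  by apply: sumr_ge0 => i _; exact: S1_ge0.
have KM0 : 0 < KM.
  by rewrite /KM ltr_wpDl // sumr_ge0 // => i _; exact: S1_ge0.
have Mbound : forall k (y : 'I_n -> C), nc (\sum_j M k j * y j) <= KM * S1 y.
  move=> k y; apply: le_trans (vdot_le (fun j => M k j) y) _.
  by rewrite ler_wpM2r ?S1_ge0.
pose nn : R := n%:R.
have nn0 : 0 <= nn by rewrite ler0n.
have h12 : (0 : R) < 1 / 2 by rewrite divr_gt0 ?ltr01 ?ltr0n.
have [e e0 he] := exists_eps (A := KM * nn * (2 * nn)) (e := 1 / 2)
  (mulr_ge0 (mulr_ge0 (ltW KM0) nn0) (mulr_ge0 (ler0n _ 2) nn0)) h12.
have [d1 d10 hd1] := hSD e e0.
pose beta := Num.min d1 eta / 2.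
have beta0 : 0 < beta by rewrite divr_gt0 ?min_gt0 ?ltr0n.
have beta_d1 : 2 * beta <= d1.
  by rewrite /beta mulrC divfK ?pnatr_eq0 // min_le1.
have beta_eta : 2 * beta <= eta.
  by rewrite /beta mulrC divfK ?pnatr_eq0 // min_le2.
have beta2 : 0 < beta / 2 by rewrite divr_gt0 ?ltr0n.
have [t t0 ht] := exists_eps (A := KM * nn) (e := beta / 2)
  (mulr_ge0 (ltW KM0) nn0) beta2.
have [d2 d20 hd2] := hC t t0.
exists (Num.min d1 d2); first exact: min_gt0.
move=> w hw.
have hw1 : cls w w0 d1 by apply: cls_le hw; exact: min_le1.
have hw2 : cls w w0 d2 by apply: cls_le hw; exact: min_le2.
pose Phi (u : 'I_n -> C) : 'I_n -> C := fun k => u k - \sum_j M k j * G u w j.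
have key : forall u u', cls u u0 (2 * beta) -> cls u' u0 (2 * beta) -> forall k,
    nc (Phi u k - Phi u' k) <= KM * (nn * e) * S1 (fun j => u j - u' j).
  move=> u u' hu hu' k.
  have hu1 : cls u u0 d1 by apply: cls_le hu.
  have hu1' : cls u' u0 d1 by apply: cls_le hu'.
  have -> : Phi u k - Phi u' k = - \sum_j M k j *
      (G u w j - G u' w j - \sum_l A j l * (u l - u' l)).
    have := @MA_sum n M A (fun l => u l - u' l) k MA.
    move=> E.
    have -> : \sum_j M k j * (G u w j - G u' w j - \sum_l A j l * (u l - u' l))
       = \sum_j M k j * G u w j - \sum_j M k j * G u' w j - (u k - u' k).
      by rewrite -E -!sumrB; apply: eq_bigr => j _; ring.
    rewrite /Phi; ring.
  rewrite ncN; apply: le_trans (Mbound _ _) _.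
  rewrite -mulrA ler_wpM2l ?(ltW KM0) //.
  apply: le_trans (S1_le (fun j => hd1 u u' w hu1 hu1' hw1 j)) _.
  by rewrite mulrA.
pose U : set (RV R (n + n)) := fun x => `|toX u0 - x| <= beta.
have clsU : forall x, U x -> cls (toC x) u0 (2 * beta).
  move=> x Ux k; have -> : u0 k = toC (toX u0) k by rewrite toXK.
  apply: le_trans (toC_diff _ _ _) _; rewrite (distrC x) ler_wpM2l ?ler0n //.
have Ke : KM * (nn * e) * (nn * 2) <= 1 / 2.
  by apply: le_trans he; rewrite le_eqVlt; apply/orP; left; apply/eqP; ring.
have KMe0 : 0 <= KM * (nn * e) by rewrite mulr_ge0 ?mulr_ge0 // ltW.
pose phi (x : RV R (n + n)) : RV R (n + n) := toX (Phi (toC x)).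
have phiU : forall x, U x -> U (phi x).
  move=> x Ux; rewrite /U /= /phi.
  apply: toX_diff; first exact: ltW beta0.
  move=> k; rewrite ncB.
  have -> : Phi (toC x) k - u0 k = (Phi (toC x) k - Phi u0 k) + (Phi u0 k - u0 k)
    by ring.
  apply: le_trans (ncD _ _) _.
  have b1 : nc (Phi (toC x) k - Phi u0 k) <= beta / 2.
    apply: le_trans (key _ _ (clsU x Ux) (cls_refl _ (ltW (mulr_gt0 (ltr0n _ 2) beta0))) k) _.
    have hS := S1_le (clsU x Ux).
    apply: le_trans (ler_wpM2l KMe0 hS) _.
    have -> : KM * (nn * e) * (n%:R * (2 * beta)) = (KM * (nn * e) * (nn * 2)) * beta
      by rewrite /nn; ring.
    have -> : beta / 2 = 1 / 2 * beta by rewrite mulrC mul1r.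
    by rewrite ler_wpM2r // ltW.
  have b2 : nc (Phi u0 k - u0 k) <= beta / 2.
    have -> : Phi u0 k - u0 k = - \sum_j M k j * G u0 w j by rewrite /Phi; ring.
    rewrite ncN; apply: le_trans (Mbound _ _) _.
    have hS := S1_le (hd2 w hw2).
    apply: le_trans (ler_wpM2l (ltW KM0) hS) _.
    by apply: le_trans ht; rewrite le_eqVlt; apply/orP; left; apply/eqP; rewrite /nn; ring.
  lra.
have contr : forall x y, U x -> U y -> `|phi x - phi y| <= 1 / 2 * `|x - y|.
  move=> x y Ux Uy; apply: toX_diff; first by apply: mulr_ge0; [exact: ltW | exact: normr_ge0].
  move=> k; apply: le_trans (key _ _ (clsU x Ux) (clsU y Uy) k) _.
  have hS : S1 (fun j => toC x j - toC y j) <= nn * (2 * `|x - y|).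
    by apply: S1_le => j; exact: toC_diff.
  apply: le_trans (ler_wpM2l KMe0 hS) _.
  have -> : KM * (nn * e) * (nn * (2 * `|x - y|)) = (KM * (nn * e) * (nn * 2)) * `|x - y|
    by ring.
  by rewrite ler_wpM2r.
have h2' : (0 : R) <= 1 / 2 by exact: ltW.
pose F : {fun U >-> U} :=
  HB.pack_for {fun U >-> U} phi (isFun.Build _ _ U U phi phiU).
have ctr : is_contraction F.
  exists (NngNum h2'); split; first by rewrite /= ltr_pdivrMr ?ltr0n // mul1r ltr1n.
  by move=> [x y] /= [Ux Uy]; exact: contr.
have clU : closed U by exact: closed_closed_ball_.
have neU : (U !=set0)%classic by exists (toX u0); rewrite /U /= subrr normr0 ltW.
have [p Up fp] := banach_fixed_point ctr clU neU.
exists (toC p); split.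
  by move=> k; apply: le_trans (clsU p Up k) beta_eta.
have fixp : forall k, \sum_j M k j * G (toC p) w j = 0.
  move=> k; have := congr1 (fun x : RV R (n + n) => toC x k) fp.
  rewrite /= /phi toXK /Phi => h.
  have := congr1 (fun z => toC p k - z) h; rewrite subrr /= subKr => h2.
  exact: (esym h2).
move=> l.
transitivity (\sum_k A l k * (\sum_j M k j * G (toC p) w j)).
  by rewrite (@MA_sum n A M (fun j => G (toC p) w j) l AM).
by apply: big1 => k _; rewrite fixp mulr0.
Qed.


Unset Implicit Arguments.
Set Strict Implicit.

Lemma fin_eventually (T : finType) (Q : T -> R -> Prop) :
  (forall t d d', 0 < d' -> d' <= d -> Q t d -> Q t d') ->
  (forall t, exists2 d : R, 0 < d & Q t d) -> exists2 d : R, 0 < d & forall t, Q t d.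
Proof.
move=> mono ex.
suff [d d0 hd] : exists2 d : R, 0 < d & forall t, t \in enum T -> Q t d.
  by exists d => // t; apply: hd; rewrite mem_enum.
elim: (enum T) => [|t s [d d0 hd]]; first by exists 1.
have [dt dt0 hdt] := ex t.
exists (Num.min dt d); first exact: min_gt0.
move=> t'; rewrite in_cons => /orP[/eqP ->|ts].
  by apply: mono hdt; [exact: min_gt0 | exact: min_le1].
by apply: mono (hd _ ts); [exact: min_gt0 | exact: min_le2].
Qed.

Lemma lin_solve (n P : nat) (B : 'I_n -> 'I_n -> ('I_P -> C) -> C)
    (c : 'I_n -> ('I_P -> C) -> C) (w0 : 'I_P -> C) (x0 : 'I_n -> C) :
  (forall k j, Cont (B k j) w0) -> (forall k, Cont (c k) w0) ->
  (\matrix_(k, j) B k j w0) \in unitmx ->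
  (forall k, \sum_j B k j w0 * x0 j + c k w0 = 0) ->
  forall eta : R, 0 < eta -> exists2 rho : R, 0 < rho & forall w, cls w w0 rho ->
    exists x, cls x x0 eta /\ forall k, \sum_j B k j w * x j + c k w = 0.
Proof.
move=> cB cc Au base eta eta0.
pose G := fun (x : 'I_n -> C) (w : 'I_P -> C) (k : 'I_n) => \sum_j B k j w * x j + c k w.
apply: (@ift n P G (\matrix_(k, j) B k j w0) x0 w0 Au _ _ eta eta0).
- move=> e e0.
  have [d d0 hd] : exists2 d : R, 0 < d & forall kj : 'I_n * 'I_n, forall w,
      cls w w0 d -> nc (B kj.1 kj.2 w - B kj.1 kj.2 w0) <= e.
    apply: (@fin_eventually _ (fun kj d => forall w, cls w w0 d ->
       nc (B kj.1 kj.2 w - B kj.1 kj.2 w0) <= e)).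
      by move=> kj d1 d2 _ le h w hw; apply: h; apply: cls_le hw.
    by move=> [k j]; exact: cB.
  exists d => // u u' w _ _ hw k.
  have -> : G u w k - G u' w k - \sum_j (\matrix_(k0, j0) B k0 j0 w0) k j * (u j - u' j)
      = \sum_j (B k j w - B k j w0) * (u j - u' j).
    have E : \sum_j (B k j w - B k j w0) * (u j - u' j) =
       \sum_j B k j w * u j - \sum_j B k j w * u' j - \sum_j B k j w0 * (u j - u' j).
      by rewrite -!sumrB; apply: eq_bigr => j _; ring.
    have -> : \sum_j (\matrix_(k0, j0) B k0 j0 w0) k j * (u j - u' j) =
        \sum_j B k j w0 * (u j - u' j) by apply: eq_bigr => j _; rewrite mxE.
    rewrite E /G; ring.
  apply: le_trans (nc_sum _ _ _) _; rewrite /S1 mulr_sumr; apply: ler_sum => j _.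
  by rewrite ncM ler_wpM2r ?nc_ge0 //; exact: (hd (k, j) w hw).
- move=> e e0.
  have [e1 e10 he1] := exists_eps (addr_ge0 (S1_ge0 x0) (ler01 : (0:R) <= 1)) e0.
  have [d d0 hd] : exists2 d : R, 0 < d & forall t : ('I_n * 'I_n) + 'I_n, forall w,
      cls w w0 d -> nc (match t with inl kj => B kj.1 kj.2 w - B kj.1 kj.2 w0
                                    | inr k => c k w - c k w0 end) <= e1.
    apply: (@fin_eventually _ (fun t d => forall w, cls w w0 d ->
       nc (match t with inl kj => B kj.1 kj.2 w - B kj.1 kj.2 w0
                       | inr k => c k w - c k w0 end) <= e1)).
      by move=> t d1 d2 _ le h w hw; apply: h; apply: cls_le hw.
    by move=> [[k j]|k]; [exact: cB | exact: cc].
  exists d => // w hw k.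
  have -> : G x0 w k = \sum_j (B k j w - B k j w0) * x0 j + (c k w - c k w0).
    transitivity ((\sum_j B k j w * x0 j + c k w) - (\sum_j B k j w0 * x0 j + c k w0)).
      by rewrite base subr0.
    have E : \sum_j (B k j w - B k j w0) * x0 j =
       \sum_j B k j w * x0 j - \sum_j B k j w0 * x0 j.
      by rewrite -sumrB; apply: eq_bigr => j _; ring.
    rewrite E; ring.
  apply: le_trans (ncD _ _) _.
  have h1 : nc (\sum_j (B k j w - B k j w0) * x0 j) <= e1 * S1 x0.
    apply: le_trans (nc_sum _ _ _) _; rewrite /S1 mulr_sumr; apply: ler_sum => j _.
    by rewrite ncM ler_wpM2r ?nc_ge0 //; exact: (hd (inl (k, j)) w hw).
  have h2 : nc (c k w - c k w0) <= e1 by exact: (hd (inr k) w hw).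
  have : e1 * S1 x0 + e1 <= e by apply: le_trans he1; rewrite mulrDr mulr1.
  lra.
Qed.


Unset Implicit Arguments.
Set Strict Implicit.

Section Main.
Variables (n r : nat) (f : 'I_n -> {mpoly int[n + n + r]}) (I : {set 'I_n}).
Local Notation N := (n + n + r).

Definition sel (j : 'I_n) : 'I_N := if j \in I then xvar r j else yvar r j.
Definition au (a u : 'I_n -> C) : 'I_n -> C := fun i => if i \in I then u i else a i.
Definition bu (b u : 'I_n -> C) : 'I_n -> C := fun j => if j \in I then b j else u j.
Definition ufrom (a b : 'I_n -> C) : 'I_n -> C := fun j => if j \in I then a j else b j.

Lemma au_from a b : au a (ufrom a b) = a.
Proof. by apply: functional_extensionality => i; rewrite /au /ufrom; case: (i \in I). Qed.
Lemma bu_from a b : bu b (ufrom a b) = b.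
Proof. by apply: functional_extensionality => i; rewrite /bu /ufrom; case: (i \in I). Qed.

Lemma pt_x (a b : 'I_n -> C) (z : 'I_r -> C) i : pt a b z (xvar r i) = a i.
Proof.
by rewrite /pt /xvar -[lshift r _]/(unsplit (inl _)) unsplitK
  -[lshift n i]/(unsplit (inl _)) unsplitK.
Qed.
Lemma pt_y (a b : 'I_n -> C) (z : 'I_r -> C) j : pt a b z (yvar r j) = b j.
Proof.
by rewrite /pt /yvar -[lshift r _]/(unsplit (inl _)) unsplitK
  -[rshift n j]/(unsplit (inr _)) unsplitK.
Qed.
Lemma pt_z (a b : 'I_n -> C) (z : 'I_r -> C) l : pt a b z (rshift (n + n) l) = z l.
Proof. by rewrite /pt -[rshift _ l]/(unsplit (inr _)) unsplitK. Qed.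

Lemma sum_N (T : zmodType) (F : 'I_N -> T) :
  \sum_m F m = \sum_i F (xvar r i) + \sum_j F (yvar r j) + \sum_l F (rshift (n + n) l).
Proof. by rewrite big_split_ord /= big_split_ord. Qed.

Lemma W_diff (T : zmodType) (Phi : 'I_N -> C -> T) (Phi0 : forall m, Phi m 0 = 0)
    (a b u u' : 'I_n -> C) (z : 'I_r -> C) :
  \sum_m Phi m (pt (au a u) (bu b u) z m - pt (au a u') (bu b u') z m)
  = \sum_j Phi (sel j) (u j - u' j).
Proof.
rewrite sum_N.
rewrite [X in _ + X]big1 ?addr0; last by move=> l _; rewrite !pt_z subrr Phi0.
rewrite -big_split; apply: eq_bigr => j _.
rewrite !pt_x !pt_y /au /bu /sel; case: (j \in I); rewrite subrr Phi0 /=.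
  exact: addr0.
exact: add0r.
Qed.

Lemma W_cls (a b u : 'I_n -> C) (z z0 : 'I_r -> C) d : 0 <= d -> cls u (ufrom a b) d -> cls z z0 d ->
  cls (pt (au a u) (bu b u) z) (pt a b z0) d.
Proof.
move=> d0 hu hz m; rewrite -(splitK m); case: (fintype.split m) => [m1|l] /=; last first.
  by rewrite -[rshift _ l]/(unsplit (inr _)) !pt_z.
rewrite -(splitK m1); case: (fintype.split m1) => [i|j] /=.
  rewrite -[lshift r (lshift n i)]/(xvar r i) !pt_x /au.
  have := hu i; rewrite /ufrom; case: (i \in I) => // _.
  by rewrite subrr nc0.
rewrite -[lshift r (rshift n j)]/(yvar r j) !pt_y /bu.
have := hu j; rewrite /ufrom; case: (j \in I) => // _.
by rewrite subrr nc0.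
Qed.

End Main.


Unset Implicit Arguments.
Set Strict Implicit.
Arguments sel {n r} I j.
Arguments au {n} I a u _.
Arguments bu {n} I b u _.
Arguments ufrom {n} I a b _.

Lemma Cont_sum N (I : Type) (s : seq I) (F : I -> ('I_N -> C) -> C) w0 :
  (forall i, Cont (F i) w0) -> Cont (fun w => \sum_(i <- s) F i w) w0.
Proof.
move=> h; elim: s => [|i s ih].
  have -> : (fun w : 'I_N -> C => \sum_(i <- [::]) F i w) = fun _ => 0.
    by apply: functional_extensionality => w; rewrite big_nil.
  exact: Cont_const.
have -> : (fun w => \sum_(j <- i :: s) F j w) = fun w => F i w + \sum_(j <- s) F j w.
  by apply: functional_extensionality => w; rewrite big_cons.
exact: Cont_add.
Qed.

Lemma Cont_dpoly N (p : {mpoly int[N]}) m w0 : Cont (fun w => dpoly p m w) w0.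
Proof.
move=> e e0; have [d d0 h] := (@Ppoly_all N (mderiv m p) w0).1 e e0.
by exists d.
Qed.

Section Main2.
Variables (n r : nat) (f : 'I_n -> {mpoly int[n + n + r]}) (I : {set 'I_n}).
Local Notation N := (n + n + r).

Definition Jw (w : 'I_N -> C) : 'M[C]_n :=
  \matrix_(k < n, j < n) dpoly (f k) (if j \in I then xvar r j else yvar r j) w.

Lemma jac_persist (w0 : 'I_N -> C) : Jw w0 \in unitmx ->
  exists2 rho : R, 0 < rho & forall w, cls w w0 rho -> Jw w \in unitmx.
Proof.
move=> Ju.
have col : forall c : 'I_n, exists2 rho : R, 0 < rho & forall w, cls w w0 rho ->
    exists x : 'I_n -> C, forall k, \sum_j dpoly (f k) (sel I j) w * x j
       + - ((k == c)%:R) = 0.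
  move=> c.
  have base : forall k, \sum_j dpoly (f k) (sel I j) w0 * invmx (Jw w0) j c
      + - ((k == c)%:R) = 0.
    move=> k; have := congr1 (fun M : 'M[C]_n => M k c) (mulmxV Ju).
    rewrite !mxE => <-; apply/eqP; rewrite subr_eq0; apply/eqP; apply: eq_bigr => j _.
    by rewrite mxE.
  have [rho rho0 h] := @lin_solve n N (fun k j w => dpoly (f k) (sel I j) w)
    (fun k _ => - ((k == c)%:R)) w0 (fun j => invmx (Jw w0) j c)
    (fun k j => Cont_dpoly _ _ _ _) (fun k => Cont_const _ _) Ju base 1 ltr01.
  exists rho => // w hw; have [x [_ hx]] := h w hw; by exists x.
have [rho rho0 hrho] := @fin_eventually _ (fun c d => forall w, cls w w0 d ->
    exists x : 'I_n -> C, forall k, \sum_j dpoly (f k) (sel I j) w * x j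
       + - ((k == c)%:R) = 0) (fun c d d' _ le h w hw => h w (cls_le le hw)) col.
exists rho => // w hw.
have [X hX] := fin_all_exists (fun c => hrho c w hw).
have : Jw w *m (\matrix_(j, c) X c j) = 1%:M.
  apply/matrixP => k c; rewrite !mxE.
  have := hX c k; move/eqP; rewrite addr_eq0 opprK => /eqP <-.
  by apply: eq_bigr => j _; rewrite !mxE.
by case/mulmx1_unit.
Qed.


Lemma zero_persist (a b : 'I_n -> C) (z0 : 'I_r -> C) :
  (forall k, evalC (f k) (pt a b z0) = 0) -> Jw (pt a b z0) \in unitmx ->
  forall eta : R, 0 < eta -> exists2 rho : R, 0 < rho & forall z, cls z z0 rho ->
    exists u, cls u (ufrom I a b) eta /\
      forall k, evalC (f k) (pt (au I a u) (bu I b u) z) = 0.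
Proof.
move=> hz Ju eta eta0.
pose w0 := pt a b z0.
pose G := fun (u : 'I_n -> C) (z : 'I_r -> C) (k : 'I_n) =>
  evalC (f k) (pt (au I a u) (bu I b u) z).
apply: (@ift n r G (Jw w0) (ufrom I a b) z0 Ju _ _ eta eta0).
- move=> e e0.
  have [d d0 hd] := @fin_eventually _ (fun k d => forall w w', cls w w0 d -> cls w' w0 d ->
      nc (evalC (f k) w - evalC (f k) w' - vdot (fun m => dpoly (f k) m w0)
        (fun m => w m - w' m)) <= e * S1 (fun m => w m - w' m))
    (fun k d d' _ le h w w' hw hw' => h w w' (cls_le le hw) (cls_le le hw'))
    (fun k => (@Ppoly_all N (f k) w0).2 e e0).
  exists d => // u u' z hu hu' hz' k.
  have hW := @W_cls n r I a b u z z0 d (ltW d0) hu hz'.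
  have hW' := @W_cls n r I a b u' z z0 d (ltW d0) hu' hz'.
  have E1 : vdot (fun m => dpoly (f k) m w0)
      (fun m => pt (au I a u) (bu I b u) z m - pt (au I a u') (bu I b u') z m)
      = \sum_j (Jw w0) k j * (u j - u' j).
    rewrite /vdot (@W_diff n r I _ (fun m x => dpoly (f k) m w0 * x) (fun m => mulr0 _)).
    by apply: eq_bigr => j _; rewrite mxE.
  have E2 : S1 (fun m => pt (au I a u) (bu I b u) z m - pt (au I a u') (bu I b u') z m)
      = S1 (fun j => u j - u' j).
    by rewrite /S1 (@W_diff n r I _ (fun m x => nc x) (fun m => nc0)).
  rewrite -E1 -E2; exact: hd k _ _ hW hW'.
- move=> e e0.
  have [d d0 hd] := @fin_eventually _ (fun k d => forall w, cls w w0 d ->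
      nc (evalC (f k) w - evalC (f k) w0) <= e)
    (fun k d d' _ le h w hw => h w (cls_le le hw))
    (fun k => (@Ppoly_all N (f k) w0).1 e e0).
  exists d => // z hz' k.
  have := @W_cls n r I a b (ufrom I a b) z z0 d (ltW d0) (cls_refl _ (ltW d0)) hz'.
  rewrite /G au_from bu_from => hc.
  by have := hd k _ hc; rewrite /w0 hz subr0.
Qed.

Definition kerw (w : 'I_N -> C) (v : 'I_(n + n) -> C) :=
  forall k, \sum_(m < n + n) dpoly (f k) (lshift r m) w * v m = 0.

Definition ext (x : 'I_n -> C) : 'I_(n + n) -> C := fun m =>
  match fintype.split m with
  | inl i => if i \in I then x i else 0
  | inr j => if j \in I then 0 else x j end.

Lemma sum_nn (T : zmodType) (F : 'I_(n + n) -> T) :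
  \sum_m F m = \sum_i F (lshift n i) + \sum_j F (rshift n j).
Proof. by rewrite big_split_ord. Qed.

Lemma ext_sum (T : zmodType) (Phi : 'I_(n + n) -> C -> T) (Phi0 : forall m, Phi m 0 = 0)
    (x : 'I_n -> C) :
  \sum_m Phi m (ext x m) = \sum_j Phi (if j \in I then lshift n j else rshift n j) (x j).
Proof.
rewrite sum_nn -big_split; apply: eq_bigr => j _ /=.
rewrite /ext -[lshift n j]/(unsplit (inl j)) -[rshift n j]/(unsplit (inr j)) !unsplitK.
case: (j \in I); rewrite Phi0 /=; [exact: addr0 | exact: add0r].
Qed.

Lemma ker_persist (w0 : 'I_N -> C) (v : 'I_(n + n) -> C) (i0 : 'I_(n + n)) :
  Jw w0 \in unitmx -> kerw w0 v -> v i0 != 0 ->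
  exists2 rho : R, 0 < rho & forall w, cls w w0 rho ->
    exists v', kerw w v' /\ v' i0 != 0.
Proof.
move=> Ju hv vi0.
have nv0 : 0 < nc (v i0).
  rewrite lt_def nc_ge0 andbT; apply/eqP => h; move: vi0; rewrite (nc_eq0 _ h) eqxx //.
have base : forall k, \sum_j dpoly (f k) (sel I j) w0 * (fun _ => 0) j
    + \sum_m dpoly (f k) (lshift r m) w0 * v m = 0.
  by move=> k; rewrite big1 ?add0r ?hv // => j _; rewrite mulr0.
have cc : forall k, Cont (fun w => \sum_m dpoly (f k) (lshift r m) w * v m) w0.
  move=> k; apply: (@Cont_sum N _ (index_enum 'I_(n + n))
     (fun m w => dpoly (f k) (lshift r m) w * v m)) => m.
  apply: (@Cont_mul N (fun w => dpoly (f k) (lshift r m) w) (fun _ => v m));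
    [exact: Cont_dpoly | exact: Cont_const].
have eta0 : 0 < nc (v i0) / 2 by rewrite divr_gt0 ?ltr0n.
have [rho rho0 h] := @lin_solve n N (fun k j w => dpoly (f k) (sel I j) w)
  (fun k w => \sum_m dpoly (f k) (lshift r m) w * v m) w0 (fun _ => 0)
  (fun k j => Cont_dpoly _ _ _ _) cc Ju base _ eta0.
exists rho => // w hw.
have [x [hx hk]] := h w hw.
exists (fun m => v m + ext x m); split.
  move=> k /=; rewrite -[RHS](hk k) addrC.
  have -> : \sum_m dpoly (f k) (lshift r m) w * (v m + ext x m) =
      \sum_m dpoly (f k) (lshift r m) w * v m + \sum_m dpoly (f k) (lshift r m) w * ext x m.
    by rewrite -big_split; apply: eq_bigr => m _; rewrite mulrDr.
  congr (_ + _).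
  rewrite (@ext_sum _ (fun m y => dpoly (f k) (lshift r m) w * y) (fun m => mulr0 _)).
  by apply: eq_bigr => j _; rewrite /sel; case: (j \in I).
have hext : nc (ext x i0) <= nc (v i0) / 2.
  rewrite /ext; case: (fintype.split i0) => j; case: (j \in I);
    rewrite ?nc0 ?divr_ge0 ?nc_ge0 ?ler0n //; have := hx j; rewrite subr0 //.
apply/negP => /eqP /= /eqP; rewrite addr_eq0 => /eqP e.
move: hext; rewrite -ncN -e; lra.
Qed.

End Main2.


Unset Implicit Arguments.
Set Strict Implicit.
Arguments sel {n r} I j.
Arguments au {n} I a u _.
Arguments bu {n} I b u _.
Arguments ufrom {n} I a b _.
Arguments Jw {n r} f I w.
Arguments kerw {n r} f w v.

Lemma distinct_eta n (a : 'I_n -> C) : (forall i, a i != 0) ->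
  (forall i j, a i = a j -> i = j) ->
  exists2 eta : R, 0 < eta & forall i j,
    eta * 2 < (if i == j then nc (a i) else nc (a i - a j)).
Proof.
move=> hnz hinj.
suff [eta eta0 h] : exists2 eta : R, 0 < eta & forall ij : 'I_n * 'I_n, eta * 2 <
   (if ij.1 == ij.2 then nc (a ij.1) else nc (a ij.1 - a ij.2)).
  by exists eta => // i j; exact: (h (i, j)).
apply: (@fin_eventually _ (fun ij d => d * 2 <
   (if ij.1 == ij.2 then nc (a ij.1) else nc (a ij.1 - a ij.2)))) => [[i j] d d' _ le h|[i j]] /=.
  by apply: le_lt_trans h; rewrite ler_wpM2r ?ler0n.
have gpos : 0 < (if i == j then nc (a i) else nc (a i - a j)).
  case: eqP => [_|ne].
    rewrite lt_def nc_ge0 andbT; apply/eqP => h; move: (hnz i); rewrite (nc_eq0 _ h) eqxx //.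
  rewrite lt_def nc_ge0 andbT; apply/eqP => h; apply: ne; apply: hinj.
  by apply/eqP; rewrite -subr_eq0 (nc_eq0 _ h).
exists ((if i == j then nc (a i) else nc (a i - a j)) / 4).
  by rewrite divr_gt0 ?ltr0n.
move: gpos; set g := (if _ then _ else _) => gpos; lra.
Qed.

Lemma main_step n r (f : 'I_n -> {mpoly int[n + n + r]}) (z0 : 'I_r -> C)
    (a b : 'I_n -> C) (I : {set 'I_n}) :
  (forall k, evalC (f k) (pt a b z0) = 0) -> (forall i, a i != 0) ->
  (forall i j, a i = a j -> i = j) -> Jw f I (pt a b z0) \in unitmx ->
  forall rho' : R, 0 < rho' -> exists2 rho : R, 0 < rho & forall z, cls z z0 rho ->
    exists a' b', balanced_zero f z a' b' /\ cls (pt a' b' z) (pt a b z0) rho'.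
Proof.
move=> hz hnz hinj Ju rho' rho'0.
have [rJ rJ0 hJ] := @jac_persist n r f I _ Ju.
have [e0 e00 he0] := @distinct_eta n a hnz hinj.
pose eta := Num.min e0 (Num.min rJ rho').
have eta0 : 0 < eta by rewrite !min_gt0.
have eta_e0 : eta <= e0 by apply: min_le1.
have eta_rJ : eta <= rJ by apply: le_trans (min_le2 _ _) (min_le1 _ _).
have eta_rho' : eta <= rho' by apply: le_trans (min_le2 _ _) (min_le2 _ _).
have [rho rho0 hrho] := @zero_persist n r f I a b z0 hz Ju eta eta0.
exists (Num.min rho eta); first exact: min_gt0.
move=> z hz'.
have [u [hu hzero]] := hrho z (cls_le (min_le1 _ _) hz').
have hzeta : cls z z0 eta by apply: cls_le hz'; exact: min_le2.
have hW := @W_cls n r I a b u z z0 eta (ltW eta0) hu hzeta.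
have ha : forall i, nc (au I a u i - a i) <= eta.
  move=> i; have := hu i; rewrite /au /ufrom; case: (i \in I) => // _.
  by rewrite subrr nc0 ltW.
exists (au I a u), (bu I b u); split; last exact: cls_le eta_rho' hW.
split.
- exact: hzero.
- move=> i; apply/eqP => h0; have := ha i; rewrite h0 sub0r ncN.
  have := he0 i i; rewrite eqxx; lra.
- move=> i j e; case: (eqVneq i j) => // ne; exfalso.
  have := he0 i j; rewrite (negbTE ne).
  have : nc (a i - a j) <= nc (a i - au I a u i) + nc (au I a u j - a j).
    have -> : a i - a j = (a i - au I a u i) + (au I a u j - a j) by rewrite e; ring.
    exact: ncD.
  rewrite (ncB (a i) (au I a u i)); have := ha i; have := ha j; lra.
- exists I; exact: hJ _ (cls_le eta_rJ hW).
Qed.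

Theorem proposition1 (n r : nat) (f : 'I_n -> {mpoly int[n + n + r]}) :
  open_Cr (fun z : 'I_r -> C => exists a b : 'I_n -> C, balanced_zero f z a b) /\
  open_Cr (fun z : 'I_r -> C => exists a b : 'I_n -> C, well_balanced_zero f z a b).
Proof.
have cvt : forall (z z0 : 'I_r -> C) (rho : R),
    (forall l, `|z l - z0 l| < (rho%:C)%C) -> cls z z0 rho.
  by move=> z z0 rho h l; apply/ltW; rewrite -ltcE'; exact: h l.
split.
  move=> z0 [a [b [hz hnz hinj [I Ju]]]].
  have [rho rho0 h] := @main_step n r f z0 a b I hz hnz hinj Ju 1 ltr01.
  exists rho; split => // z hz'.
  have [a' [b' [hb _]]] := h z (cvt _ _ _ hz').
  by exists a', b'.
move=> z0 [a [b [[hz hnz hinj [I Ju]] hnk]]].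
pose w0 := pt a b z0.
have hv : forall i : 'I_n, exists v, kerw f w0 v /\ v (lshift n i) != 0.
  move=> i; apply: Classical_Prop.NNPP => hne; apply: hnk; exists i, (a i) => v hv.
  case: (eqVneq (v (lshift n i)) 0) => [->|ne]; first by rewrite addr0.
  by exfalso; apply: hne; exists v.
have [rK rK0 hK] := @fin_eventually _ (fun i d => forall w, cls w w0 d ->
    exists v', kerw f w v' /\ v' (lshift n i) != 0)
  (fun i d d' _ le h w hw => h w (cls_le le hw))
  (fun i => let: ex_intro v (conj kv nv) := hv i in
            @ker_persist n r f I w0 v (lshift n i) Ju kv nv).
have [rho rho0 h] := @main_step n r f z0 a b I hz hnz hinj Ju rK rK0.
exists rho; split => // z hz'.
have [a' [b' [hb hcl]]] := h z (cvt _ _ _ hz').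
exists a', b'; split => // -[i [c H]].
have [v' [kv nv]] := hK i _ hcl.
have k0 : in_ker_DG f z a' b' (fun _ => 0).
  by move=> k; rewrite big1 // => m _; rewrite mulr0.
have h0 := H _ k0.
have h1 := H v' kv.
have : a' i + v' (lshift n i) = a' i + 0 by rewrite h1 h0.
by move/addrI => e; move: nv; rewrite e eqxx.
Qed.
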